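(* Let $\Gamma$ be a numerical semigroup, let $e'\in\Gamma\setminus\{0\}$ and $\Gamma_{e'}=\{0\}\cup(e'+\Gamma)$. For any $m\in\Gamma$, \[ \mathrm{Ap}(\Gamma_{e'},e'+m)=(e'+\mathrm{Ap}(\Gamma,m))\cup\big(e'+m+(\mathrm{Ap}(\Gamma,e')\setminus\{0\})\big)\cup\{0\}. \]
   Context: A numerical semigroup is a subset of $\mathbb N$ containing $0$, closed under addition, with finite complement. For a numerical semigroup $S$ and $x\in\mathbb Z$, $\mathrm{Ap}(S,x)=\{s\in S: s-x\notin S\}$. *)

(* Defs.v *)
From Stdlib Require Import Arith Lia.

Definition numerical_semigroup (S : nat -> Prop) : Prop :=
  S 0 /\ (forall a b, S a -> S b -> S (a + b)) /\
  exists N, forall n, N <= n -> S n.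

(* Ap(S, x) = { s in S : s - x notin S }, where s - x is an integer;
   for x : nat, s - x notin S iff s < x or (x <= s and S (s - x) fails). *)
Definition Apery (S : nat -> Prop) (x : nat) (s : nat) : Prop :=
  S s /\ ~ (x <= s /\ S (s - x)).

Definition shifted (S : nat -> Prop) (e : nat) (n : nat) : Prop :=
  n = 0 \/ exists g, S g /\ n = e + g.

(* Main.v *)
Require Import Defs.
From Stdlib Require Import Arith Lia Classical.

Theorem proposition3p2 (G : nat -> Prop) (e m : nat) :
  numerical_semigroup G -> G e -> e <> 0 -> G m ->
  forall n : nat,
    Apery (shifted G e) (e + m) n <->
    ((exists a, Apery G m a /\ n = e + a) \/
     (exists b, Apery G e b /\ b <> 0 /\ n = e + m + b) \/
     n = 0).
Proof.
  intros [H0 [Hadd _]] He Hne Hm n. unfold Apery, shifted. split.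
  - intros [[Hn | [g [Hg Hn]]] Hnot].
    + right; right; exact Hn.
    + subst n.
      destruct (classic (m <= g /\ G (g - m))) as [[Hle Hgm] | Hno].
      * right; left. exists (g - m). split; [split|split]; auto.
        -- intros [Hle2 Hb]. apply Hnot. split; [lia|]. right.
           exists (g - m - e). split; [exact Hb|lia].
        -- intro Hz. apply Hnot. split; [lia|]. left; lia.
        -- lia.
      * left. exists g. split; [split|]; auto.
  - intros [[a [[Ha Hna] Hn]] | [[b [[Hb Hnb] [Hb0 Hn]]] | Hn]]; subst n.
    + split. right; exists a; auto.
      intros [Hle [Hz | [h [Hh Heq]]]].
      * apply Hna. split; [lia|]. replace (a - m) with 0 by lia. exact H0.
      * apply Hna. split; [lia|].
        replace (a - m) with (e + h) by lia. apply Hadd; auto.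
    + split. right; exists (m + b). split; [apply Hadd; auto|lia].
      intros [Hle [Hz | [h [Hh Heq]]]].
      * lia.
      * apply Hnb. split; [lia|]. replace (b - e) with h by lia. exact Hh.
    + split. left; reflexivity. lia.
Qed.
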